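(* Let $m,n\in\mathbb{N}$, $T=\{1,\dots,m\}$, and let $\mathcal{F}:\mathbb{R}^{m\times n}\times\mathbb{R}^m\rightrightarrows\mathbb{R}^n$ be given by $\mathcal{F}(A,b)=\{x\in\mathbb{R}^n\mid Ax\le b\}$. Let $(\bar A,\bar b)$ satisfy $\mathcal{F}(\bar A,\bar b)\neq\emptyset$. Then $$\operatorname{Lipusc}\mathcal{F}(\bar A,\bar b)=\lim_{\delta\downarrow 0}\ \sup\left\{\frac{(\|x\|+1)\,\operatorname{dist}\big(x,\mathcal{F}(\bar A,\bar b)\big)}{\|(\bar Ax-\bar b)_+\|_\infty}\ \Bigg|\ x\in\mathbb{R}^n,\ \|(\bar Ax-\bar b)_+\|_\infty\le\delta(\|x\|+1)\right\},$$ where the limit exists in $[0,+\infty]$.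
   Context: $\mathbb{R}^n$ carries an arbitrary norm $\|\cdot\|$ with dual norm $\|u\|_*=\max_{\|x\|\le1}|u'x|$. $\mathbb{R}^m$ carries $\|b\|_\infty=\max_t|b_t|$. The parameter space $\mathbb{R}^{m\times n}\times\mathbb{R}^m$ carries the norm $\|(A,b)\|=\max_{t\in T}\max\{\|a_t\|_*,|b_t|\}$, where $a_t'$ is the $t$-th row of $A$. $(\bar Ax-\bar b)_+$ is the vector with components $\max\{\bar a_t'x-\bar b_t,0\}$. $\operatorname{dist}(x,\Omega)=\inf_{\omega\in\Omega}\|x-\omega\|$, with $\inf\emptyset=+\infty$; the convention $0/0:=0$ is used. For a set-valued map $\mathcal{M}:Y\rightrightarrows X$ between metric spaces and $\bar y$ with $\mathcal{M}(\bar y)\ne\emptyset$, the Lipschitz upper semicontinuity modulus $\operatorname{Lipusc}\mathcal{M}(\bar y)$ is the infimum of all $\kappa\ge0$ for which there is a neighborhood $V$ of $\bar y$ with $\operatorname{dist}(x,\mathcal{M}(\bar y))\le\kappa\operatorname{dist}(y,\bar y)$ for all $y\in V$ and all $x\in\mathcal{M}(y)$ (infimum of the empty set is $+\infty$). *)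

(* Defs.v *)
From HB Require Import structures.
From mathcomp Require Import all_boot all_order all_algebra.
From mathcomp Require Import all_classical all_reals all_analysis.
Set Implicit Arguments. Unset Strict Implicit. Unset Printing Implicit Defensive.
Import Order.TTheory GRing.Theory Num.Theory.
Local Open Scope classical_set_scope.
Local Open Scope ring_scope.

Section Defs.
Variables (R : realType) (m n : nat).

Definition is_norm (N : 'cV[R]_n -> R) : Prop :=
  (forall x, N x = 0 -> x = 0) /\
  (forall (c : R) x, N (c *: x) = `|c| * N x) /\
  (forall x y, N (x + y) <= N x + N y).

Definition dualnorm (N : 'cV[R]_n -> R) (u : 'rV[R]_n) : R :=
  sup [set `|(u *m x) 0 0| | x in [set x : 'cV[R]_n | N x <= 1]].

Definition param_norm (N : 'cV[R]_n -> R) (A : 'M[R]_(m, n)) (b : 'cV[R]_m) : R :=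
  \big[Num.max/0]_(t < m) Num.max (dualnorm N (row t A)) `|b t 0|.

Definition feas (A : 'M[R]_(m, n)) (b : 'cV[R]_m) : set 'cV[R]_n :=
  [set x | forall t : 'I_m, (A *m x) t 0 <= b t 0].

(* dist(x, Omega) = inf_{w in Omega} ||x - w||, inf of empty set = +oo *)
Definition distN (N : 'cV[R]_n -> R) (x : 'cV[R]_n) (Om : set 'cV[R]_n) : \bar R :=
  ereal_inf [set (N (x - w))%:E | w in Om].

Definition resid (A : 'M[R]_(m, n)) (b : 'cV[R]_m) (x : 'cV[R]_n) : R :=
  \big[Num.max/0]_(t < m) Num.max ((A *m x - b) t 0) 0.

Definition Lipusc_feas (N : 'cV[R]_n -> R) (Ab : 'M[R]_(m, n)) (bb : 'cV[R]_m) : \bar R :=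
  ereal_inf [set k%:E | k in [set k : R | 0 <= k /\
     exists2 eps : R, 0 < eps &
       forall (A : 'M[R]_(m, n)) (b : 'cV[R]_m),
         param_norm N (A - Ab) (b - bb) < eps ->
         forall x, feas A b x ->
           (distN N x (feas Ab bb) <= (k * param_norm N (A - Ab) (b - bb))%:E)%E]].

(* the quotient a / r in \bar R with the convention 0/0 := 0
   (for r = 0 we return 0) *)
Definition equot (a : \bar R) (r : R) : \bar R :=
  if r == 0 then 0%E else (a * (r^-1)%:E)%E.

Definition rhs_sup (N : 'cV[R]_n -> R) (Ab : 'M[R]_(m, n)) (bb : 'cV[R]_m) (d : R) : \bar R :=
  ereal_sup [set equot ((N x + 1)%:E * distN N x (feas Ab bb))%E (resid Ab bb x)
            | x in [set x : 'cV[R]_n | resid Ab bb x <= d * (N x + 1)]].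

End Defs.

(* Main.v *)
Require Import Defs.
From HB Require Import structures.
From mathcomp Require Import all_boot all_order all_algebra.
From mathcomp Require Import all_classical all_reals all_analysis.
From mathcomp Require Import ring lra.
Import Order.TTheory GRing.Theory Num.Theory.
Import numFieldTopology.Exports numFieldNormedType.Exports.
Set Implicit Arguments. Unset Strict Implicit. Unset Printing Implicit Defensive.
Local Open Scope classical_set_scope.
Local Open Scope ring_scope.

Lemma bigmax_ge (R : realType) (I : finType) (F : I -> R) i :
  F i <= \big[Num.max/0]_(t : I) F t.
Proof.
have : forall s, i \in s -> F i <= \big[Num.max/0]_(t <- s) F t.
  elim=> // a s IH; rewrite inE big_cons => /orP[/eqP->|/IH h].
    by rewrite le_max lexx.
  by rewrite le_max h orbT.
by apply; rewrite mem_index_enum.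
Qed.

Lemma bigmax_le (R : realType) (I : finType) (F : I -> R) c :
  0 <= c -> (forall t, F t <= c) -> \big[Num.max/0]_(t : I) F t <= c.
Proof.
move=> c0 Fc; elim/big_ind: _ => //.
  by move=> x y hx hy; rewrite ge_max hx hy.
Qed.

Lemma bigmax_ge0 (R : realType) (I : finType) (F : I -> R) :
  0 <= \big[Num.max/0]_(t : I) F t.
Proof. elim/big_rec: _ => // i x _ hx; by rewrite le_max hx orbT. Qed.

Lemma trmx_norm (R : realType) p q (x : 'M[R]_(p, q)) : `|x^T| = `|x|.
Proof.
have H : forall p q (y : 'M[R]_(p, q)), `|y^T| <= `|y|.
  move=> p' q' y; rewrite (_ : `|y^T| = mx_norm y^T) // mx_normrE.
  apply/bigmax_leP; split => [|[i j] _]; first exact: normr_ge0.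
  rewrite mxE (_ : `|y| = mx_norm y) // mx_normrE.
  exact: (le_bigmax _ (fun ij => `|y ij.1 ij.2|) (j, i)).
apply/eqP; rewrite eq_le H /=. by have := H _ _ x^T; rewrite trmxK.
Qed.

Lemma coord_le (R : realType) p q (x : 'M[R]_(p, q)) i j : `|x i j| <= `|x|.
Proof.
rewrite (_ : `|x| = mx_norm x) // mx_normrE.
exact: (le_bigmax _ (fun ij => `|x ij.1 ij.2|) (i, j)).
Qed.

Lemma trmx_continuous (R : realType) p q : continuous (fun x : 'M[R]_(p, q) => x^T).
Proof.
move=> x; apply/(@cvgrPdist_le _ _ _ (nbhs x) (nbhs_filter x)) => e e0.
have : (fun y : 'M[R]_(p, q) => y) @ nbhs x --> x by exact: cvg_id.
move/cvgrPdist_le => /(_ e e0).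
apply: filterS => y; by rewrite -linearB /= trmx_norm.
Qed.

Lemma N0 (R : realType) n (N : 'cV[R]_n -> R) : is_norm N -> N 0 = 0.
Proof. by move=> [_ [hZ _]]; rewrite -(scale0r (0 : 'cV[R]_n)) hZ normr0 mul0r. Qed.

Lemma NZ (R : realType) n (N : 'cV[R]_n -> R) : is_norm N ->
  forall c x, N (c *: x) = `|c| * N x.
Proof. by move=> [_ [hZ _]]. Qed.

Lemma ND (R : realType) n (N : 'cV[R]_n -> R) : is_norm N ->
  forall x y, N (x + y) <= N x + N y.
Proof. by move=> [_ [_ hD]]. Qed.

Lemma NN (R : realType) n (N : 'cV[R]_n -> R) : is_norm N ->
  forall x, N (- x) = N x.
Proof. by move=> hN x; rewrite -scaleN1r (NZ hN) normrN normr1 mul1r. Qed.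

Lemma N_ge0 (R : realType) n (N : 'cV[R]_n -> R) : is_norm N ->
  forall x, 0 <= N x.
Proof.
move=> hN x; have := ND hN x (- x); rewrite subrr (N0 hN) (NN hN).
by rewrite -mulr2n pmulrn_lge0.
Qed.

Lemma N_sum (R : realType) n (N : 'cV[R]_n -> R) (I : finType) (F : I -> 'cV[R]_n) :
  is_norm N -> N (\sum_(i : I) F i) <= \sum_(i : I) N (F i).
Proof.
move=> hN; elim/big_rec2: _ => [|i y1 y2 _ h]; first by rewrite (N0 hN).
apply: le_trans (ND hN (F i) y2) _; by rewrite lerD2l.
Qed.

Lemma N_upper (R : realType) n (N : 'cV[R]_n -> R) : is_norm N ->
  exists2 C, 0 <= C & forall x, N x <= C * `|x|.
Proof.
move=> hN; exists (\sum_(i < n) N (delta_mx i 0)).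
  by apply: sumr_ge0 => i _; exact: N_ge0.
move=> x.
have ex : x = \sum_(i < n) x i 0 *: delta_mx i 0.
  rewrite {1}(matrix_sum_delta x); apply: eq_bigr => i _.
  by rewrite big_ord1.
rewrite {1}ex; apply: le_trans (@N_sum _ _ _ _ (fun i : 'I_n => x i 0 *: delta_mx i 0) hN) _.
rewrite mulr_suml; apply: ler_sum => i _; rewrite (NZ hN) mulrC ler_wpM2l //.
  exact: N_ge0.
exact: coord_le.
Qed.

Lemma N_lip (R : realType) n (N : 'cV[R]_n -> R) : is_norm N ->
  forall x y, `|N x - N y| <= N (x - y).
Proof.
move=> hN x y; have h1 := ND hN (x - y) y; have h2 := ND hN (y - x) x.
rewrite subrK in h1; rewrite subrK -opprB (NN hN) in h2.
rewrite ler_norml; apply/andP; split; lra.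
Qed.

Lemma N_cont (R : realType) n (N : 'cV[R]_n -> R) : is_norm N -> continuous N.
Proof.
move=> hN; have [C C0 hC] := N_upper hN.
move=> x; apply/(@cvgrPdist_le _ _ _ (nbhs x) (nbhs_filter x)) => e e0.
have : (fun y : 'cV[R]_n => y) @ nbhs x --> x by exact: cvg_id.
move/(@cvgrPdist_le _ _ _ (nbhs x) (nbhs_filter x)) => /(_ (e / (C + 1))).
rewrite divr_gt0 // ?ltr_wpDl // => /(_ isT).
apply: filterS => y hy; apply: le_trans (N_lip hN _ _) _.
apply: le_trans (hC _) _; apply: le_trans (ler_wpM2l C0 hy) _.
rewrite mulrA ler_pdivrMr ?ltr_wpDl // mulrDr mulr1 mulrC lerDl; exact: ltW.
Qed.

Lemma cV_compact (R : realType) n (A : set 'cV[R]_n) :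
  bounded_set A -> closed A -> compact A.
Proof.
move=> bA cA.
pose A' := [set v : 'rV[R]_n | A v^T].
have -> : A = [set v^T | v in A'].
  apply/seteqP; split => [x Ax|_ [v Av <-] //].
  by exists x^T; rewrite /A' /= trmxK.
apply: continuous_compact; first exact/continuous_subspaceT/trmx_continuous.
apply: bounded_closed_compact.
  move: bA; rewrite /= /bounded_near; apply: filterS => M hM v Av.
  by rewrite /= -trmx_norm; exact: hM.
exact: (proj1 (continuous_closedP _) (@trmx_continuous R 1 n) A cA).
Qed.

Lemma N_lower (R : realType) n (N : 'cV[R]_n -> R) : is_norm N ->
  exists2 c : R, 0 < c & forall x : 'cV[R]_n, c * `|x| <= N x.
Proof.
case: n N => [|n] N hN.
  exists 1 => // x; have -> : x = 0 by apply/matrixP => -[].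
  by rewrite normr0 mulr0; exact: N_ge0.
pose S := [set x : 'cV[R]_n.+1 | `|x| = 1].
have e0 : (delta_mx ord0 ord0 : 'cV[R]_n.+1) != 0.
  apply/eqP => /matrixP/(_ ord0 ord0); rewrite !mxE /= => /eqP.
  by rewrite oner_eq0.
have S0 : S !=set0.
  exists (`|delta_mx ord0 ord0 : 'cV[R]_n.+1|^-1 *: delta_mx ord0 ord0).
  by rewrite /S /= normrZ normfV normr_id mulVf // normr_eq0.
have cS : compact S.
  apply: cV_compact.
    rewrite /= /bounded_near; near=> M => x /= ->.
    near: M; exact: nbhs_pinfty_ge.
  have := proj1 (continuous_closedP _) (@norm_continuous _ 'cV[R]_n.+1) [set 1].
  by apply; exact: closed_eq.
have [c0 Sc0 hmin] := compact_EVT_min S0 cS (@continuous_subspaceT _ _ S N (N_cont hN)).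
rewrite inE /S /= in Sc0.
exists (N c0).
  rewrite lt_neqAle N_ge0 // andbT eq_sym; apply/eqP => /(proj1 hN) c00.
  by move: Sc0; rewrite c00 normr0 => /eqP; rewrite eq_sym oner_eq0.
move=> x; case: (eqVneq x 0) => [->|x0]; first by rewrite normr0 mulr0 N_ge0.
have := hmin (`|x|^-1 *: x).
rewrite inE /S /= normrZ normfV normr_id mulVf ?normr_eq0 // => /(_ erefl).
rewrite (NZ hN) normfV normr_id => h.
by rewrite -ler_pdivlMr ?normr_gt0 // mulrC.
Unshelve. all: by end_near.
Qed.

Lemma sqdist_cont (R : realType) n (p : 'cV[R]_n) :
  continuous (fun c : 'cV[R]_n => \sum_(i < n) (p i 0 - c i 0) * (p i 0 - c i 0)).
Proof.
apply: (@continuous_big _ _ +%R 0 xpredT (@add_continuous R)) => i _.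
have sc : continuous (fun c : 'cV[R]_n => p i 0 - c i 0).
  move=> c; apply: (@continuousB _ _ _ (fun=> p i 0) (fun c : 'cV[R]_n => c i 0)).
    exact: cst_continuous.
  exact: coord_continuous.
by move=> c; exact: (@continuousM _ _ (fun c : 'cV[R]_n => p i 0 - c i 0) _ c (sc c) (sc c)).
Qed.

Lemma separation (R : realType) n (N : 'cV[R]_n -> R) (p : 'cV[R]_n) : is_norm N ->
  1 < N p -> exists u : 'rV[R]_n,
    (forall y, `|(u *m y) 0 0| <= N y) /\ 1 < (u *m p) 0 0.
Proof.
move=> hN Np.
have [c0 c0pos hc0] := N_lower hN.
pose B := [set c : 'cV[R]_n | N c <= 1].
have B0 : B !=set0 by exists 0; rewrite /B /= (N0 hN).
have cB : compact B.
  apply: cV_compact.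
    rewrite /= /bounded_near; near=> M => x /= Nx.
    apply: (@le_trans _ _ c0^-1).
      have h := hc0 x. rewrite /B /= in Nx. have h2 : c0 * `|x| <= 1 by exact: le_trans h Nx.
      by rewrite -(ler_pM2l c0pos) mulfV ?gt_eqF.
    near: M; apply: nbhs_pinfty_ge; exact: num_real.
  have := proj1 (continuous_closedP _) (N_cont hN) [set r | r <= 1].
  by apply; exact: closed_le.
pose f := fun c : 'cV[R]_n => \sum_(i < n) (p i 0 - c i 0) * (p i 0 - c i 0).
have [cs Bcs hmin] := compact_EVT_min B0 cB
  (@continuous_subspaceT _ _ B f (@sqdist_cont R n p)).
rewrite inE /B /= in Bcs.
pose w := p - cs.
pose g := fun y : 'cV[R]_n => (w^T *m y) 0 0.
have gE : forall y, g y = \sum_(i < n) w i 0 * y i 0.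
  by move=> y; rewrite /g mxE; apply: eq_bigr => i _; rewrite mxE.
have gD : forall y z, g (y + z) = g y + g z.
  by move=> y z; rewrite /g mulmxDr mxE.
have gZ : forall k y, g (k *: y) = k * g y.
  by move=> k y; rewrite /g -scalemxAr mxE.
have gN : forall y, g (- y) = - g y.
  by move=> y; rewrite -scaleN1r gZ mulN1r.
have var : forall c, B c -> g c <= g cs.
  move=> c Bc; rewrite /B /= in Bc.
  pose d := c - cs.
  pose D := \sum_(i < n) d i 0 * d i 0.
  have D0 : 0 <= D by apply: sumr_ge0 => i _; rewrite -expr2 sqr_ge0.
  have key : forall t, 0 < t -> t <= 1 -> 2 * g d <= t * D.
    move=> t t0 t1.
    have Bt : B (cs + t *: d).
      rewrite /B /= (_ : cs + t *: d = (1 - t) *: cs + t *: c); last first.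
        by rewrite /d scalerBr scalerBl scale1r addrA addrAC.
      apply: le_trans (ND hN _ _) _; rewrite !(NZ hN) ger0_norm ?subr_ge0 //.
      rewrite (ger0_norm (ltW t0)); nra.
    have := hmin _ (mem_set Bt); rewrite /f => h.
    have E : \sum_(i < n) (p i 0 - (cs + t *: d) i 0) * (p i 0 - (cs + t *: d) i 0)
      = \sum_(i < n) (p i 0 - cs i 0) * (p i 0 - cs i 0) - 2 * t * g d + t * t * D.
      rewrite gE /D !mulr_sumr -sumrB -big_split /=; apply: eq_bigr => i _.
      rewrite /w /d !mxE; ring.
    rewrite E in h.
    have : t * (2 * g d) <= t * (t * D) by nra.
    by rewrite ler_pM2l.
  have gd : g d <= 0.
    rewrite leNgt; apply/negP => sd.
    have sD : 0 < g d + D by apply: ltr_wpDr.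
    have t0 : 0 < g d / (g d + D) by apply: divr_gt0.
    have t1 : g d / (g d + D) <= 1 by rewrite ler_pdivrMr // mul1r lerDl.
    have := key _ t0 t1.
    have : g d / (g d + D) * D <= g d.
      by rewrite mulrAC ler_pdivrMr //; nra.
    lra.
  have -> : c = cs + d by rewrite /d addrC subrK.
  by rewrite gD; lra.
have g0 : g 0 = 0 by rewrite /g mulmx0 mxE.
have al0 : 0 <= g cs by rewrite -g0; apply: var; rewrite /B /= (N0 hN).
have abs : forall y, `|g y| <= g cs * N y.
  move=> y; case: (eqVneq (N y) 0) => [/(proj1 hN) ->|Ny0].
    by rewrite g0 normr0 (N0 hN) mulr0.
  have Nyp : 0 < N y by rewrite lt_neqAle eq_sym Ny0 N_ge0.
  have By : B ((N y)^-1 *: y).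
    by rewrite /B /= (NZ hN) ger0_norm ?invr_ge0 ?N_ge0 // mulVf.
  have Bny : B (- ((N y)^-1 *: y)) by rewrite /B /= (NN hN).
  have h1 := var _ By; have h2 := var _ Bny.
  rewrite gN gZ in h2; rewrite gZ in h1.
  have Nyi : 0 < (N y)^-1 by rewrite invr_gt0.
  rewrite ler_norml; apply/andP; split.
    rewrite -(ler_pM2l Nyi) mulrN mulrCA mulVf // mulr1; lra.
  by rewrite -(ler_pM2l Nyi) mulrCA mulVf // mulr1.
have gp : g cs < g p.
  have -> : p = cs + w by rewrite /w addrC subrK.
  rewrite gD ltrDl gE lt_neqAle; apply/andP; split; last first.
    by apply: sumr_ge0 => i _; rewrite -expr2 sqr_ge0.
  rewrite eq_sym; apply/eqP => hs.
  have h := psumr_eq0P (fun k _ => sqr_ge0 (w k 0)) hs.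
  have w0 : w = 0.
    apply/matrixP => i j; rewrite ord1 [RHS]mxE; apply/eqP.
    by have /eqP := h i erefl; rewrite sqrf_eq0.
  move: Bcs; have -> : cs = p by rewrite -(subrK cs p) -/w w0 add0r.
  by rewrite leNgt Np.
have alp : 0 < g cs.
  rewrite lt_neqAle al0 andbT; apply/eqP => a0.
  have := abs p; rewrite -a0 mul0r normr_le0 => /eqP gp0.
  by move: gp; rewrite gp0 -a0 ltxx.
exists ((g cs)^-1 *: w^T).
have uE : forall y, (((g cs)^-1 *: w^T) *m y) 0 0 = (g cs)^-1 * g y.
  by move=> y; rewrite -scalemxAl mxE.
split.
  move=> y; rewrite uE normrM ger0_norm ?invr_ge0 //.
  by rewrite ler_pdivrMl // abs.
by rewrite uE ltr_pdivlMl // mulr1.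
Unshelve. all: by end_near.
Qed.

Lemma dot_bound (R : realType) n (u : 'rV[R]_n) (x : 'cV[R]_n) :
  `|(u *m x) 0 0| <= (\sum_(j < n) `|u 0 j|) * `|x|.
Proof.
rewrite mxE mulr_suml; apply: le_trans (ler_norm_sum _ _ _) _.
apply: ler_sum => j _; rewrite normrM ler_wpM2l //; exact: coord_le.
Qed.

Lemma dual_le (R : realType) n (N : 'cV[R]_n -> R) (u : 'rV[R]_n) : is_norm N ->
  forall x, `|(u *m x) 0 0| <= dualnorm N u * N x.
Proof.
move=> hN x.
have [c0 c0pos hc0] := N_lower hN.
pose S := [set `|(u *m y) 0 0| | y in [set y : 'cV[R]_n | N y <= 1]].
have hS : has_sup S.
  split; first by exists `|(u *m (0 : 'cV[R]_n)) 0 0|; exists 0 => //; rewrite /= (N0 hN).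
  exists ((\sum_(j < n) `|u 0 j|) / c0) => _ [y /= Ny <-].
  apply: le_trans (dot_bound u y) _.
  rewrite ler_wpM2l ?sumr_ge0 // -(ler_pM2l c0pos) mulfV ?gt_eqF //.
  exact: le_trans (hc0 y) Ny.
case: (eqVneq (N x) 0) => [/(proj1 hN) ->|Nx0].
  by rewrite mulmx0 mxE normr0 (N0 hN) mulr0.
have Nxp : 0 < N x by rewrite lt_neqAle eq_sym Nx0 N_ge0.
have : S `|(u *m ((N x)^-1 *: x)) 0 0|.
  exists ((N x)^-1 *: x) => //=.
  by rewrite (NZ hN) ger0_norm ?invr_ge0 ?N_ge0 // mulVf.
move/(sup_upper_bound hS); rewrite -scalemxAr mxE normrM ger0_norm ?invr_ge0 ?N_ge0 //.
by rewrite ler_pdivrMl // mulrC.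
Qed.

Lemma dual_ub (R : realType) n (N : 'cV[R]_n -> R) (u : 'rV[R]_n) (k : R) : is_norm N ->
  0 <= k -> (forall y, `|(u *m y) 0 0| <= k * N y) -> dualnorm N u <= k.
Proof.
move=> hN k0 hk; apply: ge_sup.
  by exists `|(u *m (0 : 'cV[R]_n)) 0 0|; exists 0 => //; rewrite /= (N0 hN).
move=> _ [y /= Ny <-]; apply: le_trans (hk y) _.
by rewrite -{2}(mulr1 k) ler_wpM2l.
Qed.

Lemma subE (R : realType) m (M b : 'cV[R]_m) t : (M - b) t 0 = M t 0 - b t 0.
Proof. by rewrite !mxE. Qed.

Lemma resid_ge (R : realType) m n (A : 'M[R]_(m, n)) b x t :
  (A *m x - b) t 0 <= resid A b x.
Proof.
apply: le_trans (le_bigmax _ (fun t => Num.max ((A *m x - b) t 0) 0) t).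
by rewrite le_max lexx.
Qed.

Lemma resid_ge0 (R : realType) m n (A : 'M[R]_(m, n)) b x : 0 <= resid A b x.
Proof. by apply/bigmax_geP; left. Qed.

Lemma resid_le (R : realType) m n (A : 'M[R]_(m, n)) b x c : 0 <= c ->
  (forall t, (A *m x - b) t 0 <= c) -> resid A b x <= c.
Proof.
move=> c0 h; apply/bigmax_leP; split => // t _.
by rewrite ge_max h.
Qed.

Lemma resid0_feas (R : realType) m n (A : 'M[R]_(m, n)) b x :
  resid A b x <= 0 -> feas A b x.
Proof.
move=> h t; have := le_trans (resid_ge A b x t) h.
by rewrite subE subr_le0.
Qed.

Lemma feas_resid0 (R : realType) m n (A : 'M[R]_(m, n)) b x :
  feas A b x -> resid A b x = 0.
Proof.
move=> h; apply/eqP; rewrite eq_le resid_ge0 andbT; apply: resid_le => // t.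
by rewrite subE subr_le0; exact: h.
Qed.

Lemma param_ge (R : realType) m n (N : 'cV[R]_n -> R) (A : 'M[R]_(m, n)) (b : 'cV[R]_m) t :
  Num.max (dualnorm N (row t A)) `|b t 0| <= param_norm N A b.
Proof. exact: (le_bigmax _ (fun t => Num.max (dualnorm N (row t A)) `|b t 0|) t). Qed.

Lemma param_ge0 (R : realType) m n (N : 'cV[R]_n -> R) (A : 'M[R]_(m, n)) (b : 'cV[R]_m) :
  0 <= param_norm N A b.
Proof. by apply/bigmax_geP; left. Qed.

Lemma dist_ge0 (R : realType) n (N : 'cV[R]_n -> R) x F : is_norm N ->
  (0 <= distN N x F)%E.
Proof.
move=> hN; apply: le_ereal_inf_tmp => _ [w _ <-].
by rewrite lee_fin N_ge0.
Qed.

Lemma dist_le (R : realType) n (N : 'cV[R]_n -> R) x (F : set 'cV[R]_n) w :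
  F w -> (distN N x F <= (N (x - w))%:E)%E.
Proof. by move=> Fw; apply: ereal_inf_lbound; exists w. Qed.

Lemma dist_in (R : realType) n (N : 'cV[R]_n -> R) x (F : set 'cV[R]_n) : is_norm N ->
  F x -> distN N x F = 0%E.
Proof.
move=> hN Fx; apply/eqP; rewrite eq_le dist_ge0 // andbT.
by have := dist_le N x Fx; rewrite subrr (N0 hN).
Qed.

Lemma key_ineq (R : realType) m n (N : 'cV[R]_n -> R) (Ab A : 'M[R]_(m, n))
  (bb b : 'cV[R]_m) x : is_norm N -> feas A b x ->
  resid Ab bb x <= param_norm N (A - Ab) (b - bb) * (N x + 1).
Proof.
move=> hN hx.
have r0 := param_ge0 N (A - Ab) (b - bb).
apply: resid_le; first by rewrite mulr_ge0 // addr_ge0 ?N_ge0.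
move=> t; rewrite subE.
have h1 := hx t.
have e : ((row t (A - Ab)) *m x) 0 0 = (A *m x) t 0 - (Ab *m x) t 0.
  by rewrite -row_mul mxE mulmxBl subE.
have h2 : (Ab *m x) t 0 - (A *m x) t 0 <= dualnorm N (row t (A - Ab)) * N x.
  have := dual_le (row t (A - Ab)) hN x; rewrite e => h.
  by apply: le_trans h; rewrite -normrN opprB; exact: ler_norm.
have := param_ge N (A - Ab) (b - bb) t; rewrite ge_max => /andP[h3 h4].
have h5 : dualnorm N (row t (A - Ab)) * N x <= param_norm N (A - Ab) (b - bb) * N x.
  by rewrite ler_wpM2r ?N_ge0.
have h6 : b t 0 - bb t 0 <= param_norm N (A - Ab) (b - bb).
  by apply: le_trans h4; rewrite subE; exact: ler_norm.
rewrite mulrDr mulr1; lra.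
Qed.

Lemma dist_fin (R : realType) n (N : 'cV[R]_n -> R) x (F : set 'cV[R]_n) : is_norm N ->
  F !=set0 -> exists2 D, 0 <= D & distN N x F = D%:E.
Proof.
move=> hN [w Fw]; have h1 := dist_ge0 x F hN; have h2 := dist_le N x Fw.
move: h1 h2; case: (distN N x F) => [r| |] // h1 h2.
by exists r; rewrite // -lee_fin.
Qed.

Lemma rhs_ge0 (R : realType) m n (N : 'cV[R]_n -> R) (Ab : 'M[R]_(m, n))
  (bb : 'cV[R]_m) (d : R) : is_norm N -> feas Ab bb !=set0 -> 0 <= d ->
  (0 <= rhs_sup N Ab bb d)%E.
Proof.
move=> hN [w Fw] d0; apply: ereal_sup_ubound; exists w.
  by rewrite /= feas_resid0 // mulr_ge0 // addr_ge0 ?N_ge0.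
by rewrite /equot feas_resid0 // eqxx.
Qed.

Lemma claimA (R : realType) m n (N : 'cV[R]_n -> R) (Ab : 'M[R]_(m, n))
  (bb : 'cV[R]_m) (d : R) : is_norm N -> feas Ab bb !=set0 -> 0 < d ->
  (Lipusc_feas N Ab bb <= rhs_sup N Ab bb d)%E.
Proof.
move=> hN hne d0.
have := rhs_ge0 hN hne (ltW d0).
case E : (rhs_sup N Ab bb d) => [s| |] // s0; last by rewrite leey.
rewrite lee_fin in s0.
apply: ereal_inf_lbound; exists s => //; split => //; exists d => // A b hAb x hx.
set rho := param_norm N (A - Ab) (b - bb).
have kr := @key_ineq _ _ _ N Ab A bb b x hN hx; rewrite -/rho in kr.
have rho0 : 0 <= rho by exact: param_ge0.
have [Dr Dr0 DE] := @dist_fin _ _ N x _ hN hne.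
rewrite DE lee_fin.
have [r0|rpos] := leP (resid Ab bb x) 0.
  move: DE; rewrite dist_in //; last exact: resid0_feas.
  by move=> [<-]; rewrite mulr_ge0.
have Nx1 : 0 < N x + 1 by rewrite ltr_wpDl ?N_ge0.
have : (equot ((N x + 1)%:E * distN N x (feas Ab bb))%E (resid Ab bb x) <= s%:E)%E.
  rewrite -E; apply: ereal_sup_ubound; exists x => //=.
  apply: le_trans kr _; rewrite ler_wpM2r ?ltW //.
rewrite /equot gt_eqF // DE -!EFinM lee_fin => h.
have : (N x + 1) * Dr <= s * resid Ab bb x.
  by rewrite -ler_pdivrMr.
have : s * resid Ab bb x <= s * (rho * (N x + 1)) by rewrite ler_wpM2l.
move=> h1 h2.
have : (N x + 1) * Dr <= (N x + 1) * (s * rho) by rewrite mulrCA mulrA; lra.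
by rewrite ler_pM2l.
Qed.

Lemma le_eta (R : realType) (a b : R) : 0 <= b ->
  (forall e, 0 < e -> e <= 1 -> a <= b * (1 + e)) -> a <= b.
Proof.
move=> b0 h; apply/ler_addgt0Pr => e e0.
pose et := Num.min 1 (e / (b + 1)).
have b1 : 0 < b + 1 by rewrite ltr_wpDl.
have et0 : 0 < et by rewrite /et lt_min ltr01 divr_gt0.
have et1 : et <= 1 by rewrite /et ge_min lexx.
have et2 : et <= e / (b + 1) by rewrite /et ge_min lexx orbT.
apply: le_trans (h _ et0 et1) _; rewrite mulrDr mulr1 lerD2l.
apply: le_trans (ler_wpM2l b0 et2) _.
rewrite mulrA ler_pdivrMr // mulrDr mulr1 mulrC lerDl; exact: ltW.
Qed.

Lemma dual_dir (R : realType) n (N : 'cV[R]_n -> R) (x : 'cV[R]_n) (e : R) :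
  is_norm N -> 0 < e ->
  exists u : 'rV[R]_n, (forall y, `|(u *m y) 0 0| <= N y) /\
    N x <= (1 + e) * (u *m x) 0 0.
Proof.
move=> hN e0.
case: (eqVneq (N x) 0) => [Nx0|Nx0].
  exists 0; split => [y|]; first by rewrite mul0mx mxE normr0 N_ge0.
  by rewrite mul0mx mxE mulr0 Nx0.
have Nxp : 0 < N x by rewrite lt_neqAle eq_sym Nx0 N_ge0.
have e1 : 0 < 1 + e by rewrite addr_gt0.
have Np : 1 < N (((1 + e) / N x) *: x).
  by rewrite (NZ hN) ger0_norm ?divr_ge0 ?ltW // mulrAC mulfK ?gt_eqF // ltrDl.
have [u [hu hup]] := @separation R n N (((1 + e) / N x) *: x) hN Np.
exists u; split => //.
move: hup; rewrite -scalemxAr mxE mulrAC ltr_pdivlMr // mul1r; exact: ltW.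
Qed.

Lemma claimB (R : realType) m n (N : 'cV[R]_n -> R) (Ab : 'M[R]_(m, n))
  (bb : 'cV[R]_m) (k eps : R) : is_norm N -> 0 <= k -> 0 < eps ->
  (forall (A : 'M[R]_(m, n)) (b : 'cV[R]_m),
     param_norm N (A - Ab) (b - bb) < eps ->
     forall x, feas A b x ->
     (distN N x (feas Ab bb) <= (k * param_norm N (A - Ab) (b - bb))%:E)%E) ->
  forall d : R, 0 < d -> d < eps / 2 -> (rhs_sup N Ab bb d <= k%:E)%E.
Proof.
move=> hN k0 eps0 hk d d0 deps.
apply: ge_ereal_sup => _ [x /= hxd <-].
set r := resid Ab bb x.
rewrite /equot; case: eqP => [_|/eqP rn0]; first by rewrite lee_fin.
have rpos : 0 < r by rewrite lt_neqAle eq_sym rn0 resid_ge0.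
have Nx1 : 0 < N x + 1 by rewrite ltr_wpDl ?N_ge0.
have main : forall e, 0 < e -> e <= 1 ->
    (distN N x (feas Ab bb) <= (k * (r * (1 + e) / (N x + 1)))%:E)%E.
  move=> e e0 e1.
  have [u [hu hux]] := dual_dir x hN e0.
  have ux0 : 0 <= (u *m x) 0 0.
    have : 0 <= (1 + e) * (u *m x) 0 0 by apply: le_trans hux; exact: N_ge0.
    by rewrite pmulr_rge0 // addr_gt0.
  set sg := (u *m x) 0 0 + 1.
  have sg0 : 0 < sg by rewrite /sg ltr_wpDl.
  pose lam : 'cV[R]_m := \col_t (Num.max ((Ab *m x - bb) t 0) 0 / sg).
  have lamE : forall t, lam t 0 = Num.max ((Ab *m x - bb) t 0) 0 / sg.
    by move=> t; rewrite mxE.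
  have lam0 : forall t, 0 <= lam t 0.
    by move=> t; rewrite lamE divr_ge0 ?le_max ?lexx ?orbT // ltW.
  have lamr : forall t, lam t 0 <= r / sg.
    move=> t; rewrite lamE ler_wpM2r ?invr_ge0 ?(ltW sg0) // ge_max.
    by rewrite resid_ge resid_ge0.
  pose A := Ab - lam *m u.
  pose b := bb + lam.
  have eA : A - Ab = - (lam *m u) by rewrite /A addrAC subrr add0r.
  have eb : b - bb = lam by rewrite /b addrAC subrr add0r.
  have lu : forall (y : 'cV[R]_n) t, (lam *m u *m y) t 0 = lam t 0 * (u *m y) 0 0.
    by move=> y t; rewrite -mulmxA [LHS]mxE big_ord1.
  have fx : feas A b x.
    move=> t; rewrite /A mulmxBl subE lu /b [(bb + lam) t 0]mxE.
    have h : lam t 0 * sg = Num.max ((Ab *m x - bb) t 0) 0.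
      by rewrite lamE divfK ?gt_eqF.
    have h2 : (Ab *m x - bb) t 0 <= Num.max ((Ab *m x - bb) t 0) 0.
      by rewrite le_max lexx.
    rewrite -h subE /sg mulrDr mulr1 in h2.
    lra.
  have rho_le : param_norm N (A - Ab) (b - bb) <= r / sg.
    apply/bigmax_leP; split; first by rewrite divr_ge0 ?resid_ge0 ?ltW.
    move=> t _; rewrite ge_max; apply/andP; split; last first.
      by rewrite eb ger0_norm.
    apply: le_trans (lamr t); apply: dual_ub => // y.
    rewrite eA -row_mul mxE mulNmx mxE lu normrN normrM ger0_norm //.
    exact: ler_wpM2l.
  have sgE : N x + 1 <= (1 + e) * sg.
    rewrite /sg mulrDr mulr1; lra.
  have rho_eps : param_norm N (A - Ab) (b - bb) < eps.
    apply: le_lt_trans rho_le _.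
    have h1 : r / sg <= d * (1 + e).
      rewrite ler_pdivrMr // -mulrA; apply: le_trans hxd _.
      by rewrite ler_wpM2l // ltW.
    have h2 : d * (1 + e) <= d * 2.
      rewrite ler_wpM2l ?(ltW d0) //; lra.
    lra.
  apply: le_trans (hk A b rho_eps x fx) _.
  rewrite lee_fin ler_wpM2l //; apply: le_trans rho_le _.
  rewrite ler_pdivlMr // mulrAC ler_pdivrMr // -mulrA ler_wpM2l //.
  exact: resid_ge0.
have [Dr Dr0 DE] : exists2 Dr, 0 <= Dr & distN N x (feas Ab bb) = Dr%:E.
  have := main 1 ltr01 (lexx _); have := dist_ge0 x (feas Ab bb) hN.
  case: (distN N x (feas Ab bb)) => [z| |] // h1 h2.
  by exists z; rewrite // -lee_fin.
have hD : Dr <= k * r / (N x + 1).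
  apply: (@le_eta R Dr (k * r / (N x + 1))).
    by rewrite divr_ge0 // ?mulr_ge0 ?resid_ge0 // ltW.
  move=> e e0 e1; have := main e e0 e1; rewrite DE lee_fin.
  have -> : k * (r * (1 + e) / (N x + 1)) = k * r / (N x + 1) * (1 + e).
    by rewrite !mulrA mulrAC.
  by [].
rewrite DE -!EFinM lee_fin ler_pdivrMr // mulrC.
by rewrite -ler_pdivlMr.
Qed.

Unset Implicit Arguments.

Theorem proposition1 (R : realType) (m n : nat) (N : 'cV[R]_n -> R)
  (hN : is_norm N) (Ab : 'M[R]_(m, n)) (bb : 'cV[R]_m)
  (hne : feas Ab bb !=set0) :
  rhs_sup N Ab bb d @[d --> 0^'+] --> Lipusc_feas N Ab bb.
Proof.
have LA : forall d : R, 0 < d -> (Lipusc_feas N Ab bb <= rhs_sup N Ab bb d)%E.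
  by move=> d d0; exact: (@claimA R m n N Ab bb d hN hne d0).
have L0 : (0 <= Lipusc_feas N Ab bb)%E.
  by apply: le_ereal_inf_tmp => _ [k [k0 _] <-]; rewrite lee_fin.
case EL : (Lipusc_feas N Ab bb) => [l| |]; last by rewrite EL in L0.
  have hadh : forall e : R, 0 < e -> exists k : R, exists eps : R,
      [/\ 0 <= k, 0 < eps, (forall (A : 'M[R]_(m, n)) (b : 'cV[R]_m),
       param_norm N (A - Ab) (b - bb) < eps ->
       forall x, feas A b x ->
       (distN N x (feas Ab bb) <= (k * param_norm N (A - Ab) (b - bb))%:E)%E)
      & k < l + e].
    move=> e e0.
    have Lf : Lipusc_feas N Ab bb \is a fin_num by rewrite EL.
    rewrite /Lipusc_feas in Lf.
    have [_ [k [k0 [eps eps0 hk]] <-]] := lb_ereal_inf_adherent e0 Lf.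
    rewrite -/(Lipusc_feas N Ab bb) EL -EFinD lte_fin => hkl.
    by exists k, eps; split.
  apply/fine_cvgP; split.
    have [k [eps [k0 eps0 hk _]]] := hadh 1 ltr01.
    near=> d.
    have d0 : 0 < d by near: d; exact: nbhs_right_gt.
    have deps : d < eps / 2 by near: d; apply: nbhs_right_lt; rewrite divr_gt0.
    have h1 := LA d d0; have h2 := @claimB R m n N Ab bb k eps hN k0 eps0 hk d d0 deps.
    by rewrite EL in h1; move: h1 h2; case: (rhs_sup N Ab bb d).
  apply/cvgrPdist_le => e e0.
  have [k [eps [k0 eps0 hk hkl]]] := hadh e e0.
  near=> d.
  have d0 : 0 < d by near: d; exact: nbhs_right_gt.
  have deps : d < eps / 2 by near: d; apply: nbhs_right_lt; rewrite divr_gt0.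
  have h1 := LA d d0; have h2 := @claimB R m n N Ab bb k eps hN k0 eps0 hk d d0 deps.
  rewrite EL in h1; move: h1 h2; case E : (rhs_sup N Ab bb d) => [s| |] //=.
  rewrite !lee_fin => h1 h2; rewrite E /= ler_norml; apply/andP; split; lra.
apply: cvg_near_cst; near=> d.
have d0 : 0 < d by near: d; exact: nbhs_right_gt.
by have := LA d d0; rewrite EL leye_eq => /eqP.
Unshelve. all: by end_near.
Qed.
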